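(* Let $K\subset S^3$ be a knot and $r=\frac{p}{q}$ (coprime integers). If the $r$-surgery on $K$ is $SU(2)$-cyclic, then $R^{*}_{K}\cap S(r)=\emptyset$. If the $r$-surgery on $K$ is $SO(3)$-cyclic, then $R^{*}_{K}\cap \widehat{S}(r)=\emptyset$.
   Context: Let $m,l$ be the meridian and longitude of $K$ in $\pi_1(S^3-N(K))$. Define $R_{K}\subset(\mathbb{R}/2\pi\mathbb{Z})\oplus(\mathbb{R}/2\pi\mathbb{Z})$ as the set of $(\theta,\eta)$ for which there exists a homomorphism $\rho:\pi_{1}(S^{3}-N(K))\to SU(2)$ with $\rho(m)=\mathrm{diag}(e^{i\theta},e^{-i\theta})$ and $\rho(l)=\mathrm{diag}(e^{i\eta},e^{-i\eta})$. Let $R^{*}_{K}=R_K\cap\{\eta\notin 2\pi\mathbb{Z}\}$. Set $S(r)=\{(\theta,\eta): p\theta+q\eta\in 2\pi\mathbb{Z}\ \text{or}\ p\theta+p\pi+q\eta\in 2\pi\mathbb{Z}\}$ and $\widehat S(r)=\{(\theta,\eta): p\theta+q\eta\in\pi\mathbb{Z}\}$. For $r\in\mathbb{Q}$, $K(r)$ denotes $r$-Dehn surgery on $K$; a closed orientable $3$-manifold is $SU(2)$-cyclic (resp. $SO(3)$-cyclic) if there is no homomorphism from its fundamental group to $SU(2)$ (resp. $SO(3)$) with non-cyclic image, and the $r$-surgery is so if $K(r)$ is. *)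

(* Defs.v *)
From HB Require Import structures.
From mathcomp Require Import all_boot all_order all_algebra.
From mathcomp Require Import monoid.
From mathcomp Require Import reals trigo.
From mathcomp Require Import complex.

Set Implicit Arguments.
Unset Strict Implicit.
Unset Printing Implicit Defensive.

Import GRing.Theory Num.Theory.

Definition gexpz (G : groupType) (x : G) (n : int) : G :=
  match n with
  | Posz k => natexp x k
  | Negz k => inv (natexp x k.+1)
  end.

Definition in_commutator_subgroup (G : groupType) (x : G) : Prop :=
  exists s : seq (G * G),
    x = foldr (fun pr acc => mul (commg pr.1 pr.2) acc) one s.

Definition normally_generated_by (G : groupType) (m : G) : Prop :=
  forall g : G, exists s : seq (G * bool),
    g = foldr (fun pr acc => mul (conjg (if pr.2 then m else inv m) pr.1) acc)
              one s.

(* The data of a knot K in S^3 that the statement uses: the knot group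
   G = pi_1(S^3 - N(K)) with its meridian m and (preferred) longitude l,
   together with the standard properties of knot groups:
   - m and l commute (peripheral subgroup Z^2),
   - l lies in the commutator subgroup (preferred longitude is null-homologous),
   - G is normally generated by m,
   - there is a homomorphism G -> Z sending m to 1 (so H_1 = Z generated by m). *)
Record knot_group := KnotGroup {
  kg_group : groupType;
  mer : kg_group;
  lon : kg_group;
  kg_commute : mul mer lon = mul lon mer;
  kg_lon_comm : in_commutator_subgroup lon;
  kg_normgen : normally_generated_by mer;
  kg_abel : exists d : kg_group -> int,
      (forall x y, d (mul x y) = (d x + d y)%R) /\ d mer = 1%R
}.

Local Open Scope ring_scope.

Section Matrices.
Variable R : realType.

Definition adjmx (A : 'M[R[i]]_2) : 'M[R[i]]_2 :=
  (map_mx (fun z => z^*) A)^T.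

Definition in_SU2 (A : 'M[R[i]]_2) : Prop :=
  A *m adjmx A = 1%:M /\ \det A = 1.

Definition in_SO3 (A : 'M[R]_3) : Prop :=
  A *m A^T = 1%:M /\ \det A = 1.

Definition expi (t : R) : R[i] := (cos t +i* sin t)%C.

Definition diag2 (a b : R[i]) : 'M[R[i]]_2 :=
  \matrix_(i < 2, j < 2) (if i == j then (if i == 0 :> nat then a else b) else 0).

Definition SU2_rep (G : groupType) (rho : G -> 'M[R[i]]_2) : Prop :=
  (forall x y, rho (mul x y) = rho x *m rho y) /\ (forall x, in_SU2 (rho x)).

Definition SO3_rep (G : groupType) (rho : G -> 'M[R]_3) : Prop :=
  (forall x y, rho (mul x y) = rho x *m rho y) /\ (forall x, in_SO3 (rho x)).

Definition cyclic_image_SU2 (G : groupType) (rho : G -> 'M[R[i]]_2) : Prop :=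
  exists g : 'M[R[i]]_2, forall x, exists n : int, rho x = g ^ n.

Definition cyclic_image_SO3 (G : groupType) (rho : G -> 'M[R]_3) : Prop :=
  exists g : 'M[R]_3, forall x, exists n : int, rho x = g ^ n.

(* Dehn surgery.  pi_1(K(p/q)) = pi_1(S^3 - N(K)) / << m^p l^q >>, so a
   homomorphism pi_1(K(p/q)) -> H is the same as a homomorphism
   rho : pi_1(S^3 - N(K)) -> H with rho(m^p l^q) = 1, with the same image. *)
Definition surgery_slope (K : knot_group) (p q : int) : kg_group K :=
  mul (gexpz (mer K) p) (gexpz (lon K) q).

Definition SU2_cyclic_surgery (K : knot_group) (p q : int) : Prop :=
  forall rho : kg_group K -> 'M[R[i]]_2,
    SU2_rep rho -> rho (surgery_slope K p q) = 1%:M -> cyclic_image_SU2 rho.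

Definition SO3_cyclic_surgery (K : knot_group) (p q : int) : Prop :=
  forall rho : kg_group K -> 'M[R]_3,
    SO3_rep rho -> rho (surgery_slope K p q) = 1%:M -> cyclic_image_SO3 rho.

(* R_K, R_K^*, S(r), \hat S(r); points of (R/2piZ)^2 are represented by
   real pairs (theta, eta); all these conditions are 2pi-periodic.     *)
Definition in_RK (K : knot_group) (theta eta : R) : Prop :=
  exists rho : kg_group K -> 'M[R[i]]_2,
    SU2_rep rho /\
    rho (mer K) = diag2 (expi theta) (expi (- theta)) /\
    rho (lon K) = diag2 (expi eta) (expi (- eta)).

Definition in_RK_star (K : knot_group) (theta eta : R) : Prop :=
  in_RK K theta eta /\ ~ (exists k : int, eta = 2 * pi * k%:~R).

Definition in_S (p q : int) (theta eta : R) : Prop :=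
  (exists k : int, p%:~R * theta + q%:~R * eta = 2 * pi * k%:~R) \/
  (exists k : int, p%:~R * theta + p%:~R * pi + q%:~R * eta = 2 * pi * k%:~R).

Definition in_S_hat (p q : int) (theta eta : R) : Prop :=
  exists k : int, p%:~R * theta + q%:~R * eta = pi * k%:~R.

End Matrices.

(* Main.v *)
Require Import Defs.
From HB Require Import structures.
From mathcomp Require Import all_boot all_order all_algebra.
From mathcomp Require Import monoid.
From mathcomp Require Import reals trigo.
From mathcomp Require Import complex.
From mathcomp Require Import ring lra zify.
Import Order.TTheory GRing.Theory Num.Theory.
Local Open Scope ring_scope.

Section Q.
Variable R : realType.

Definition sel3 (a b c d e f g h k : R) (i j : nat) : R :=
  match i, j with
  | 0, 0 => a | 0, 1 => b | 0, _ => c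
  | 1, 0 => d | 1, 1 => e | 1, _ => f
  | _, 0 => g | _, 1 => h | _, _ => k end.

Definition mk3 a b c d e f g h k : 'M[R]_3 :=
  \matrix_(i < 3, j < 3) sel3 a b c d e f g h k i j.

Lemma det2 (T : comPzRingType) (A : 'M[T]_2) : \det A = A 0 0 * A 1 1 - A 0 1 * A 1 0.
Proof.
rewrite (expand_det_row _ 0) !big_ord_recl big_ord0 /cofactor !det_mx11 !mxE /=.
rewrite !expr0 !expr1 mul1r mulN1r addr0 mulrN.
congr (_ * _ - _ * _); congr (A _ _); exact: val_inj.
Qed.

Lemma det_mk3 a b c d e f g h k :
  \det (mk3 a b c d e f g h k) = a * (e * k - f * h) - b * (d * k - f * g) + c * (d * h - e * g).
Proof.
rewrite (expand_det_row _ 0) !big_ord_recl big_ord0 /cofactor !det2 !mxE /=.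
rewrite !expr0 !expr1 /=.
ring.
Qed.

Lemma mul_mk3 a b c d e f g h k a' b' c' d' e' f' g' h' k' :
  mk3 a b c d e f g h k *m mk3 a' b' c' d' e' f' g' h' k' =
  mk3 (a*a' + b*d' + c*g') (a*b' + b*e' + c*h') (a*c' + b*f' + c*k')
      (d*a' + e*d' + f*g') (d*b' + e*e' + f*h') (d*c' + e*f' + f*k')
      (g*a' + h*d' + k*g') (g*b' + h*e' + k*h') (g*c' + h*f' + k*k').
Proof.
apply/matrixP => i j; rewrite !mxE !big_ord_recl big_ord0 !mxE /=.
case: i => [[|[|[|i]]] Hi] //; case: j => [[|[|[|j]]] Hj] //=; ring.
Qed.

Lemma tr_mk3 a b c d e f g h k :
  (mk3 a b c d e f g h k)^T = mk3 a d g b e h c f k.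
Proof.
apply/matrixP => i j; rewrite !mxE.
by case: i => [[|[|[|i]]] Hi] //; case: j => [[|[|[|j]]] Hj].
Qed.

Lemma one_mk3 : (1%:M : 'M[R]_3) = mk3 1 0 0 0 1 0 0 0 1.
Proof.
apply/matrixP => i j; rewrite !mxE.
by case: i => [[|[|[|i]]] Hi] //; case: j => [[|[|[|j]]] Hj].
Qed.


Record quat := Quat { qa : R; qb : R; qc : R; qd : R }.

Definition qmul (p q : quat) : quat :=
  Quat (qa p * qa q - qb p * qb q - qc p * qc q - qd p * qd q)
       (qa p * qb q + qb p * qa q - qc p * qd q + qd p * qc q)
       (qc p * qa q - qd p * qb q + qa p * qc q + qb p * qd q)
       (qc p * qb q + qd p * qa q + qa p * qd q - qb p * qc q).

Definition qneg (p : quat) : quat := Quat (- qa p) (- qb p) (- qc p) (- qd p).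

Definition qnorm (p : quat) : R := qa p ^+ 2 + qb p ^+ 2 + qc p ^+ 2 + qd p ^+ 2.

Definition adq (p : quat) : 'M[R]_3 :=
  let w := qa p in let x := qb p in let y := qc p in let z := qd p in
  mk3 (w^+2 - x^+2 - y^+2 + z^+2) (2*w*x - 2*y*z) (2*w*y + 2*x*z)
      (-2*w*x - 2*y*z) (w^+2 - x^+2 + y^+2 - z^+2) (2*w*z - 2*x*y)
      (2*x*z - 2*w*y) (-2*w*z - 2*x*y) (w^+2 + x^+2 - y^+2 - z^+2).

Lemma qnorm_mul p q : qnorm (qmul p q) = qnorm p * qnorm q.
Proof. rewrite /qnorm /=; ring. Qed.

Lemma adq_mul p q : adq (qmul p q) = adq p *m adq q.
Proof.
rewrite /adq mul_mk3; case: p => w x y z; case: q => w' x' y' z' /=.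
congr mk3; ring.
Qed.

Lemma adq_SO3 p : qnorm p = 1 -> in_SO3 (adq p).
Proof.
case: p => w x y z; rewrite /qnorm /adq /= => Hn; split.
  rewrite tr_mk3 mul_mk3 one_mk3; congr mk3;
  (try ring); (transitivity ((w ^+ 2 + x ^+ 2 + y ^+ 2 + z ^+ 2) ^+ 2);
    [ring | by rewrite Hn expr1n]).
rewrite det_mk3.
transitivity ((w ^+ 2 + x ^+ 2 + y ^+ 2 + z ^+ 2) ^+ 3); [ring | by rewrite Hn expr1n].
Qed.

Lemma sq0 (x : R) : x ^+ 2 <= 0 -> x = 0.
Proof.
move=> H; apply/eqP; rewrite -sqrf_eq0; apply/eqP.
by apply/Order.POrderTheory.le_anti; rewrite H sqr_ge0.
Qed.

Lemma mk3_entries {a b c d e f g h k a' b' c' d' e' f' g' h' k' : R} :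
  mk3 a b c d e f g h k = mk3 a' b' c' d' e' f' g' h' k' ->
  (a = a' /\ b = b' /\ c = c') /\ (d = d' /\ e = e' /\ f = f') /\ (g = g' /\ h = h' /\ k = k').
Proof.
move/matrixP => H.
have := H 0 0; have := H 0 1; have := H 0 2%:R; have := H 1 0; have := H 1 1;
have := H 1 2%:R; have := H 2%:R 0; have := H 2%:R 1; have := H 2%:R 2%:R.
by rewrite !mxE /= => *.
Qed.

Lemma adq_eq1 p : qnorm p = 1 -> adq p = 1%:M -> [/\ qb p = 0, qc p = 0 & qd p = 0].
Proof.
case: p => w x y z; rewrite /qnorm /adq one_mk3 /= => Hn H.
case: (mk3_entries H) => [[e1 [_ _]] [[_ [e2 _]] [_ [_ e3]]]].
have hw := sqr_ge0 w; have hx := sqr_ge0 x; have hy := sqr_ge0 y; have hz := sqr_ge0 z.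
split; apply: sq0; lra.
Qed.

Lemma adq_inj p q : qnorm p = 1 -> qnorm q = 1 -> adq p = adq q -> p = q \/ p = qneg q.
Proof.
case: p => w x y z; case: q => w' x' y' z'; rewrite /qnorm /adq /= => Hp Hq H.
case: (mk3_entries H) => [[e11 [e12 e13]] [[e21 [e22 e23]] [e31 [e32 e33]]]].
have Pw : w^+2 = w'^+2 by lra.
have Px : x^+2 = x'^+2 by lra.
have Py : y^+2 = y'^+2 by lra.
have Pz : z^+2 = z'^+2 by lra.
have Pwx : w * x = w' * x' by lra.
have Pyz : y * z = y' * z' by lra.
have Pwy : w * y = w' * y' by lra.
have Pxz : x * z = x' * z' by lra.
have Pwz : w * z = w' * z' by lra.
have Pxy : x * y = x' * y' by lra.
have D : (w*w' + x*x' + y*y' + z*z')^+2 = 1.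
  transitivity (w^+2 * w'^+2 + x^+2 * x'^+2 + y^+2 * y'^+2 + z^+2 * z'^+2
     + 2 * ((w * x) * (w' * x') + (w * y) * (w' * y') + (w * z) * (w' * z')
          + (x * y) * (x' * y') + (x * z) * (x' * z') + (y * z) * (y' * z'))); first by ring.
  rewrite Pw Px Py Pz Pwx Pwy Pwz Pxy Pxz Pyz.
  transitivity ((w'^+2 + x'^+2 + y'^+2 + z'^+2)^+2); first by ring.
  by rewrite Hq expr1n.
move/eqP: D; rewrite sqrf_eq1 => /orP[] /eqP Hd.
  have S : (w - w')^+2 + (x - x')^+2 + (y - y')^+2 + (z - z')^+2 = 0.
    transitivity ((w^+2 + x^+2 + y^+2 + z^+2) + (w'^+2 + x'^+2 + y'^+2 + z'^+2)
      - 2 * (w*w' + x*x' + y*y' + z*z')); first by ring.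
    by rewrite Hp Hq Hd; ring.
  have h1 := sqr_ge0 (w - w'); have h2 := sqr_ge0 (x - x');
  have h3 := sqr_ge0 (y - y'); have h4 := sqr_ge0 (z - z').
  left; congr Quat; apply/eqP; rewrite -subr_eq0; apply/eqP; apply: sq0; lra.
have S : (w + w')^+2 + (x + x')^+2 + (y + y')^+2 + (z + z')^+2 = 0.
  transitivity ((w^+2 + x^+2 + y^+2 + z^+2) + (w'^+2 + x'^+2 + y'^+2 + z'^+2)
    + 2 * (w*w' + x*x' + y*y' + z*z')); first by ring.
  by rewrite Hp Hq Hd; ring.
have h1 := sqr_ge0 (w + w'); have h2 := sqr_ge0 (x + x');
have h3 := sqr_ge0 (y + y'); have h4 := sqr_ge0 (z + z').
right; rewrite /qneg /=; congr Quat; apply/eqP; rewrite -addr_eq0; apply/eqP; apply: sq0; lra.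
Qed.

Lemma anticomm p q : qnorm p = 1 -> qnorm q = 1 -> qmul p q = qneg (qmul q p) ->
  [/\ qa p = 0, qa q = 0 & qa (qmul p q) = 0].
Proof.
case: p => w x y z; case: q => w' x' y' z'; rewrite /qnorm /qmul /qneg /= => Hp Hq [E0 E1 E2 E3].
have F0 : w * w' - x * x' - y * y' - z * z' = 0 by lra.
have F1 : w * x' + x * w' = 0 by lra.
have F2 : w * y' + y * w' = 0 by lra.
have F3 : w * z' + z * w' = 0 by lra.
have Hw' : w' = 0.
  transitivity (w' * (w ^+ 2 + x ^+ 2 + y ^+ 2 + z ^+ 2)); first by rewrite Hp mulr1.
  transitivity (w * (w * w' - x * x' - y * y' - z * z') + x * (w * x' + x * w')
     + y * (w * y' + y * w') + z * (w * z' + z * w')); first by ring.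
  by rewrite F0 F1 F2 F3; ring.
have Hw : w = 0.
  transitivity (w * (w' ^+ 2 + x' ^+ 2 + y' ^+ 2 + z' ^+ 2)); first by rewrite Hq mulr1.
  transitivity (w' * (w * w' - x * x' - y * y' - z * z') + x' * (w * x' + x * w')
     + y' * (w * y' + y * w') + z' * (w * z' + z * w')); first by ring.
  by rewrite F0 F1 F2 F3; ring.
split => //; lra.
Qed.

Lemma pure_sq p : qnorm p = 1 -> qa p = 0 -> adq p *m adq p = 1%:M.
Proof.
move=> Hn H0; rewrite -adq_mul.
have -> : qmul p p = Quat (-1) 0 0 0.
  move: Hn H0; case: p => w x y z; rewrite /qnorm /qmul /= => Hn Hw; rewrite Hw in Hn *.
  congr Quat; [by rewrite -Hn; ring | ring | ring | ring].
rewrite /adq one_mk3 /=; congr mk3; ring.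
Qed.

Lemma pure_neq1 p : qnorm p = 1 -> qa p = 0 -> adq p <> 1%:M.
Proof.
move=> Hn H0 H1; have [h1 h2 h3] := adq_eq1 p Hn H1.
move: Hn; rewrite /qnorm H0 h1 h2 h3 => /eqP; rewrite expr0n /= !addr0 eq_sym oner_eq0.
by [].
Qed.

Local Open Scope complex_scope.
Definition sel2 (p : quat) (i j : nat) : R[i] :=
  match i, j with
  | 0, 0 => qa p +i* qb p
  | 0, _ => (- qc p) +i* qd p
  | _, 0 => qc p +i* qd p
  | _, _ => qa p +i* (- qb p) end.
Local Close Scope complex_scope.

Definition su2mat (p : quat) : 'M[R[i]]_2 := \matrix_(i < 2, j < 2) sel2 p i j.

Definition qof (M : 'M[R[i]]_2) : quat :=
  Quat (complex.Re (M 0 0)) (complex.Im (M 0 0)) (complex.Re (M 1 0)) (complex.Im (M 1 0)).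

Lemma cext (u v : R[i]) : complex.Re u = complex.Re v -> complex.Im u = complex.Im v -> u = v.
Proof. by case: u => a b; case: v => c d /= -> ->. Qed.

Lemma qof_su2 p : qof (su2mat p) = p.
Proof. by case: p => w x y z; rewrite /qof !mxE. Qed.

Lemma su2mat_mul p q : su2mat p *m su2mat q = su2mat (qmul p q).
Proof.
apply/matrixP => i j; rewrite !mxE !big_ord_recl big_ord0 !mxE /=.
case: p => w x y z; case: q => w' x' y' z'.
case: i => [[|[|i]] Hi] //; case: j => [[|[|j]] Hj] //=; apply: cext => /=; ring.
Qed.

Lemma L10 : lift ord0 (ord0 : 'I_1) = (1 : 'I_2).
Proof. exact: val_inj. Qed.

Lemma su2_form M : in_SU2 M -> M = su2mat (qof M) /\ qnorm (qof M) = 1.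
Proof.
case=> H1 H2.
have H3 := mulmx1C H1.
have e00 : (adjmx M *m M) 0 0 = 1 by rewrite H3 mxE.
have e01 : (adjmx M *m M) 0 1 = 0 by rewrite H3 mxE.
rewrite /adjmx !mxE !big_ord_recl big_ord0 !mxE !L10 !addr0 in e00.
rewrite /adjmx !mxE !big_ord_recl big_ord0 !mxE !L10 !addr0 in e01.
have O0 : ord0 = 0 :> 'I_2 by exact: val_inj.
rewrite !O0 in e00 e01.
rewrite det2 in H2.
have Ed : M 1 1 = (M 0 0)^*.
  apply/eqP; rewrite -subr_eq0; apply/eqP.
  transitivity ((M 0 0)^* * (M 0 0 * M 1 1 - M 0 1 * M 1 0 - 1)
     - M 1 1 * ((M 0 0)^* * M 0 0 + (M 1 0)^* * M 1 0 - 1)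
     + M 1 0 * ((M 0 0)^* * M 0 1 + (M 1 0)^* * M 1 1)); first by ring.
  by rewrite H2 e00 e01 !subrr; ring.
have Eb : M 0 1 = - (M 1 0)^*.
  apply/eqP; rewrite -addr_eq0; apply/eqP.
  transitivity (- M 0 1 * ((M 0 0)^* * M 0 0 + (M 1 0)^* * M 1 0 - 1)
     - (M 1 0)^* * (M 0 0 * M 1 1 - M 0 1 * M 1 0 - 1)
     + M 0 0 * ((M 0 0)^* * M 0 1 + (M 1 0)^* * M 1 1)); first by ring.
  by rewrite H2 e00 e01 !subrr; ring.
split.
  apply/matrixP => i j; rewrite !mxE.
  case: i => [[|[|i]] Hi] //; case: j => [[|[|j]] Hj] //=.
  - have -> : Ordinal Hi = 0 by exact: val_inj.
    have -> : Ordinal Hj = 0 by exact: val_inj.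
    by case: (M 0 0).
  - have -> : Ordinal Hi = 0 by exact: val_inj.
    have -> : Ordinal Hj = 1 by exact: val_inj.
    by rewrite Eb; case: (M 1 0) => c0 c1; apply: cext => /=; ring.
  - have -> : Ordinal Hi = 1 by exact: val_inj.
    have -> : Ordinal Hj = 0 by exact: val_inj.
    by case: (M 1 0).
  - have -> : Ordinal Hi = 1 by exact: val_inj.
    have -> : Ordinal Hj = 1 by exact: val_inj.
    by rewrite Ed; case: (M 0 0) => c0 c1; apply: cext => /=; ring.
rewrite /qnorm /qof /=; move: e00.
case: (M 0 0) => a0 a1; case: (M 1 0) => c0 c1 => /(congr1 (@complex.Re R)) /= <-.
ring.
Qed.

Definition adm (M : 'M[R[i]]_2) : 'M[R]_3 := adq (qof M).

Lemma adm_mul A B : in_SU2 A -> in_SU2 B -> adm (A *m B) = adm A *m adm B.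
Proof.
move=> /su2_form[EA _] /su2_form[EB _].
by rewrite /adm EA EB su2mat_mul !qof_su2 adq_mul.
Qed.

Lemma adm_SO3 A : in_SU2 A -> in_SO3 (adm A).
Proof. by move=> /su2_form[_ N]; apply: adq_SO3. Qed.

End Q.
Arguments su2_form {R M}.
Arguments adm {R} M.
Arguments Quat {R} _ _ _ _.
Arguments adq {R} p.
Arguments qof {R} M.
Arguments su2mat {R} p.
Arguments qmul {R} p q.
Arguments qnorm {R} p.
Arguments qneg {R} p.
Arguments adq_inj {R p q}.
Arguments anticomm {R p q}.
Arguments pure_sq {R p}.
Arguments pure_neq1 {R p}.
Arguments adm_SO3 {R A}.
Arguments adm_mul {R A B}.

Lemma unit_of_powz (T : unitRingType) (g : T) (a : int) :
  a != 0 -> g ^ a \is a GRing.unit -> g \is a GRing.unit.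
Proof.
have P : forall n, g ^+ n.+1 \is a GRing.unit -> g \is a GRing.unit.
  move=> n; rewrite exprS unitrM_comm; first by case/andP.
  exact/commrX.
case: a => n Hn.
  case: n Hn => [//|n] _ /=; exact: P.
rewrite /exprz unitrV; exact: P.
Qed.

Lemma parity_pow (T : unitRingType) (h : T) (n : int) :
  h * h = 1 -> h ^ n = 1 \/ h ^ n = h.
Proof.
move=> hh.
have hu : h \is a GRing.unit by apply/unitrP; exists h.
rewrite (divz_eq n 2) exprzDr // mulrC -exprz_exp.
have -> : h ^ (2 : int) = 1 by rewrite (_ : h ^ (2:int) = h ^+ 2) // expr2.
rewrite exp1rz mul1r.
have : (n %% 2)%Z = 0 \/ (n %% 2)%Z = 1 by lia.
by case=> ->; [left | right; rewrite expr1z].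
Qed.

Lemma klein (T : unitRingType) (g X Y : T) (a b : int) :
  X = g ^ a -> Y = g ^ b -> X * X = 1 -> Y * Y = 1 ->
  X != 1 -> Y != 1 -> X * Y != 1 -> False.
Proof.
move=> EX EY XX YY X1 Y1 XY1.
have a0 : a != 0 by apply: contraNneq X1 => a0; rewrite EX a0 expr0z.
have gu : g \is a GRing.unit.
  apply: (@unit_of_powz _ g a a0); rewrite -EX; apply/unitrP; exists X; by split.
have [s [t Est]] := Bezoutz a b.
set u := gcdz a b in Est.
have hh : g ^ u * g ^ u = 1.
  rewrite -exprzDr // -Est.
  have -> : s * a + t * b + (s * a + t * b) = (a + a) * s + (b + b) * t by ring.
  by rewrite exprzDr // -!exprz_exp !exprzDr // -EX -EY XX YY !exp1rz mulr1.
have Xh : X = 1 \/ X = g ^ u.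
  rewrite EX -(divzK (dvdz_gcdl a b)) mulrC -exprz_exp; exact: parity_pow.
have Yh : Y = 1 \/ Y = g ^ u.
  rewrite EY -(divzK (dvdz_gcdr a b)) mulrC -exprz_exp; exact: parity_pow.
case: Xh => Xh; first by rewrite Xh eqxx in X1.
case: Yh => Yh; first by rewrite Yh eqxx in Y1.
by move: XY1; rewrite Xh Yh hh eqxx.
Qed.

Section Key.
Variable R : realType.

Lemma su2_comm (A B : 'M[R[i]]_2) (g : 'M[R]_3) (a b : int) :
  in_SU2 A -> in_SU2 B -> adm A = g ^ a -> adm B = g ^ b -> A *m B = B *m A.
Proof.
move=> HA HB EA EB.
have [FA NA] := su2_form HA; have [FB NB] := su2_form HB.
have C : adq (qmul (qof A) (qof B)) = adq (qmul (qof B) (qof A)).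
  rewrite !adq_mul -/(adm A) -/(adm B) EA EB !mulmxE.
  apply: commrXz; apply/commr_sym; apply: commrXz; exact: commr_refl.
have Npq : qnorm (qmul (qof A) (qof B)) = 1 by rewrite qnorm_mul NA NB mulr1.
have Nqp : qnorm (qmul (qof B) (qof A)) = 1 by rewrite qnorm_mul NA NB mulr1.
case: (adq_inj Npq Nqp C) => E.
  by rewrite FA FB !su2mat_mul E.
have [a0 b0 c0] := anticomm NA NB E.
exfalso; apply: (@klein _ g (adm A) (adm B) a b EA EB).
- exact: (pure_sq NA a0).
- exact: (pure_sq NB b0).
- by apply/eqP; apply: pure_neq1.
- by apply/eqP; apply: pure_neq1.
- have := pure_neq1 Npq c0; rewrite adq_mul => H; apply/eqP; exact: H.
Qed.
End Key.

Section T.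
Variable R : realType.

Lemma per2 (n : nat) (x : R) : cos (x + 2 * pi * n%:R) = cos x /\ sin (x + 2 * pi * n%:R) = sin x.
Proof.
elim: n => [|n [IH1 IH2]]; first by rewrite mulr0 addr0.
have -> : x + 2 * pi * n.+1%:R = (x + 2 * pi * n%:R) + pi *+ 2.
  by rewrite -natr1 mulr2n; ring.
by rewrite cosD2pi sinD2pi IH1 IH2.
Qed.

Lemma per2z (k : int) (x : R) : cos (x + 2 * pi * k%:~R) = cos x /\ sin (x + 2 * pi * k%:~R) = sin x.
Proof.
case: k => n; first exact: per2.
rewrite NegzE intrN.
have := per2 n.+1 (x - 2 * pi * n.+1%:R); rewrite subrK => -[E1 E2].
have -> : x + 2 * pi * - n.+1%:R = x - 2 * pi * n.+1%:R by ring.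
by rewrite -E1 -E2.
Qed.

Lemma piz (k : int) : sin (pi * k%:~R) = 0 :> R /\ cos (pi * k%:~R) ^+ 2 = 1 :> R.
Proof.
have N : forall n : nat, sin (pi * n%:R) = 0 :> R.
  elim => [|n IH]; first by rewrite mulr0 sin0.
  by rewrite -natr1 mulrDr mulr1 sinDpi IH oppr0.
have S : forall y : R, sin y = 0 -> cos y ^+ 2 = 1.
  by move=> y Hy; rewrite -(cos2Dsin2 y) Hy expr0n addr0.
case: k => n.
  have H := N n; split => //; exact: S.
rewrite NegzE intrN mulrN sinN cosN.
have H := N n.+1; rewrite H oppr0; split => //; exact: S.
Qed.

Lemma cos_eq1 (t : R) : cos t = 1 -> exists k : int, t = 2 * pi * k%:~R.
Proof.
move=> Ht.
have p0 := pi_gt0 R.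
have p2 : 0 < 2 * pi :> R by apply: mulr_gt0.
set k := Num.floor (t / (2 * pi)).
exists k.
have h1 : k%:~R * (2 * pi) <= t.
  by have := floor_le (t / (2 * pi)); rewrite ler_pdivlMr.
have h2 : t < (k + 1)%:~R * (2 * pi).
  by have := floorD1_gt (t / (2 * pi)); rewrite ltr_pdivrMr.
rewrite intrD /= in h2.
set u := t - 2 * pi * k%:~R.
have Cu : cos u = 1.
  by have := (per2z (- k) t).1; rewrite intrN mulrN Ht.
have u0 : 0 <= u by rewrite /u; lra.
have u2 : u < 2 * pi by rewrite /u; lra.
case: (lerP u pi) => hu.
  have : u = 0.
    apply: cos_inj; rewrite ?in_itv /= ?u0 ?hu ?pi_ge0 ?lexx //.
    by rewrite Cu cos0.
  by rewrite /u => /eqP; rewrite subr_eq0 => /eqP.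
have : 2 * pi - u = 0.
  apply: cos_inj; rewrite ?in_itv /= ?pi_ge0 ?lexx //.
    apply/andP; split; lra.
  transitivity (cos u); last by rewrite Cu cos0.
  have := (per2z 1 (- u)).1; rewrite mulr1 cosN => <-.
  by congr cos; ring.
lra.
Qed.
End T.

Section D.
Variable R : realType.

Definition Dm (t : R) : 'M[R[i]]_2 := diag2 (expi t) (expi (- t)).

Lemma Dm_su2 t : Dm t = su2mat (Quat (cos t) (sin t) 0 0).
Proof.
apply/matrixP => i j; rewrite !mxE.
case: i => [[|[|i]] Hi] //; case: j => [[|[|j]] Hj] //=; apply: cext => /=;
  rewrite ?cosN ?sinN //; ring.
Qed.

Lemma Dm_add s t : Dm s *m Dm t = Dm (s + t).
Proof.
rewrite !Dm_su2 su2mat_mul /qmul /= cosD sinD; congr su2mat; congr Quat; ring.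
Qed.

Lemma Dm0 : Dm 0 = 1%:M.
Proof.
rewrite Dm_su2 cos0 sin0; apply/matrixP => i j; rewrite !mxE.
case: i => [[|[|i]] Hi] //; case: j => [[|[|j]] Hj] //=; apply: cext => /=; ring.
Qed.

Lemma Dm_unit t : Dm t \is a GRing.unit.
Proof.
apply/unitrP; exists (Dm (- t)); split; rewrite -mulmxE Dm_add ?addNr ?subrr; exact: Dm0.
Qed.

Lemma Dm_inv t : (Dm t)^-1 = Dm (- t).
Proof.
apply: (mulrI (Dm_unit t)); rewrite divrr ?Dm_unit // -mulmxE Dm_add subrr Dm0 //.
Qed.

Lemma Dm_powz t (n : int) : Dm t ^ n = Dm (n%:~R * t).
Proof.
have P : forall m : nat, Dm t ^+ m = Dm (m%:R * t).
  elim => [|m IH]; first by rewrite expr0 mul0r Dm0.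
  rewrite exprS IH -mulmxE Dm_add; congr Dm; rewrite -natr1; ring.
case: n => m; first exact: P.
rewrite /exprz P Dm_inv NegzE intrN mulNr //.
Qed.

Lemma Dm_eq1 t : Dm t = 1%:M -> cos t = 1.
Proof.
move/matrixP => /(_ 0 0); rewrite !mxE /= => /(congr1 (@complex.Re R)) /=.
by [].
Qed.

Lemma qof_Dm t : qof (Dm t) = Quat (cos t) (sin t) 0 0.
Proof. by rewrite Dm_su2 qof_su2. Qed.

Lemma su2_unit (A : 'M[R[i]]_2) : in_SU2 A -> A \is a GRing.unit.
Proof.
case=> H _; apply/unitrP; exists (adjmx A); split; last exact: H.
exact: (mulmx1C H).
Qed.


Lemma scale_su2 (c : R[i]) (A : 'M[R[i]]_2) : (c = 1 \/ c = -1) -> in_SU2 A -> in_SU2 (c *: A).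
Proof.
case=> ->; first by rewrite scale1r.
case=> H1 H2; split; last by rewrite detZ sqrrN expr1n mul1r.
have -> : adjmx (-1 *: A) = -1 *: adjmx A.
  by apply/matrixP => i j; rewrite !mxE rmorphM rmorphN1.
by rewrite -scalemxAl -scalemxAr scalerA mulrNN mulr1 scale1r.
Qed.

Section Grp.
Variable G : groupType.

Section Rep.
Variable rho : G -> 'M[R[i]]_2.
Hypothesis Hr : SU2_rep rho.

Lemma repM x y : rho (mul x y) = rho x * rho y.
Proof. exact: Hr.1. Qed.

Lemma rep_one : rho one = 1.
Proof.
have u := su2_unit _ (Hr.2 one).
have E := repM one one; rewrite mul1g in E.
by apply: (mulrI u); rewrite mulr1 -E.
Qed.

Lemma rep_inv x : rho (inv x) = (rho x)^-1.
Proof.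
have u := su2_unit _ (Hr.2 x).
have E : rho (inv x) * rho x = 1 by rewrite -repM mulVg; exact: rep_one.
by rewrite -[LHS]mulr1 -(divrr u) mulrA E mul1r.
Qed.

Lemma rep_powz x n : rho (gexpz x n) = rho x ^ n.
Proof.
have P : forall m, rho (natexp x m) = rho x ^+ m.
  elim => [|m IH]; first by rewrite expg0 rep_one.
  by rewrite expgS repM IH exprS.
case: n => m /=; first exact: P.
by rewrite rep_inv P.
Qed.

Lemma rep_lon (l : G) : (forall x y, rho x * rho y = rho y * rho x) ->
  in_commutator_subgroup l -> rho l = 1.
Proof.
move=> C [s ->]; elim: s => [|[x y] s IH] /=; first exact: rep_one.
rewrite repM IH mulr1 /commg /conjg !repM.
have E1 : forall z, rho (mul (inv z) z) = 1 by move=> z; rewrite mulVg; exact: rep_one.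
rewrite (mulrA (rho (inv y))) (C (inv y) x) -mulrA mulrA -!repM.
by rewrite repM !E1 mulr1.
Qed.
End Rep.

Lemma hom_lon (d : G -> int) (l : G) : (forall x y, d (mul x y) = d x + d y) ->
  in_commutator_subgroup l -> d l = 0.
Proof.
move=> H [s ->].
have d1 : d one = 0.
  have := H one one; rewrite mul1g; lia.
elim: s => [|[x y] s IH] //=.
rewrite H IH addr0 /commg /conjg !H.
have dx : d (inv x) + d x = 0 by rewrite -H mulVg; exact: d1.
have dy : d (inv y) + d y = 0 by rewrite -H mulVg; exact: d1.
lia.
Qed.


End Grp.
Arguments repM {G rho}.
Arguments rep_one {G rho}.
Arguments rep_inv {G rho}.
Arguments rep_powz {G rho}.
Arguments rep_lon {G rho}.
Arguments hom_lon {G d l}.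

Lemma Dm_addr s t : Dm s * Dm t = Dm (s + t).
Proof. exact: Dm_add. Qed.

Lemma DmDpi t : -1 *: Dm t = Dm (t + pi).
Proof.
rewrite !Dm_su2 cosDpi sinDpi; apply/matrixP => i j; rewrite !mxE.
case: i => [[|[|i]] Hi] //; case: j => [[|[|j]] Hj] //=; apply: cext => /=; ring.
Qed.

Lemma Dm2pik (k : int) : Dm (2 * pi * k%:~R) = 1.
Proof.
have [C S] := @per2z R k 0; rewrite add0r in C S.
by rewrite Dm_su2 C S -Dm_su2; exact: Dm0.
Qed.

Lemma powz_comm (T : unitRingType) (g : T) (a b : int) : g ^ a * g ^ b = g ^ b * g ^ a.
Proof. apply: commrXz; apply/commr_sym; apply: commrXz; exact: commr_refl. Qed.

Lemma lon_trivial (K : knot_group) (rho : kg_group K -> 'M[R[i]]_2) (eta : R) :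
  SU2_rep rho -> (forall x y, rho x * rho y = rho y * rho x) ->
  rho (lon K) = Dm eta -> exists k : int, eta = 2 * pi * k%:~R.
Proof.
move=> Hr C E; apply: cos_eq1; apply: Dm_eq1.
by rewrite -E (rep_lon Hr _ C (kg_lon_comm K)).
Qed.

Lemma cyc_comm (K : knot_group) (rho : kg_group K -> 'M[R[i]]_2) :
  cyclic_image_SU2 rho -> forall x y, rho x * rho y = rho y * rho x.
Proof.
case=> g Hg x y; have [a ->] := Hg x; have [b ->] := Hg y; exact: powz_comm.
Qed.

Lemma slopeE (K : knot_group) (rho : kg_group K -> 'M[R[i]]_2) (p q : int) :
  SU2_rep rho -> rho (surgery_slope K p q) = rho (mer K) ^ p * rho (lon K) ^ q.
Proof. by move=> Hr; rewrite /surgery_slope (repM Hr) !(rep_powz Hr). Qed.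

End D.
Arguments Dm {R} t.
Arguments lon_trivial {R K rho eta}.
Arguments cyc_comm {R K rho}.
Arguments slopeE {R K rho}.

Arguments scale_su2 {R c A}.

Theorem lemma3p2 (R : realType) (K : knot_group) (p q : int)
  (hpq : coprimez p q) (hq : q != 0) :
  (SU2_cyclic_surgery R K p q ->
     forall theta eta : R, ~ (in_RK_star K theta eta /\ in_S p q theta eta)) /\
  (SO3_cyclic_surgery R K p q ->
     forall theta eta : R, ~ (in_RK_star K theta eta /\ in_S_hat p q theta eta)).
Proof.
split.
  move=> Hc theta eta [[[rho [Hr [Hm Hl]]] He] HS]; apply: He.
  have Hm' : rho (mer K) = Dm theta := Hm.
  have Hl' : rho (lon K) = Dm eta := Hl.
  case: HS => [[k Hk] | [k Hk]].
    apply: (lon_trivial Hr _ Hl'); apply: cyc_comm; apply: (Hc rho Hr).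
    by rewrite (slopeE _ _ Hr) Hm' Hl' !Dm_powz Dm_addr Hk Dm2pik.
  have [dd [Hd Hdm]] := kg_abel K.
  pose s x := (-1 : R[i]) ^ (dd x).
  have s_pm : forall x, s x = 1 \/ s x = -1.
    move=> x; apply: parity_pow; by rewrite mulrNN mulr1.
  have sM : forall x y, s (mul x y) = s x * s y.
    by move=> x y; rewrite /s Hd expfzDr // oppr_eq0 oner_eq0.
  pose rho' x := s x *: rho x.
  have Hr' : SU2_rep rho'.
    split.
      move=> x y; rewrite /rho' sM (Hr.1 x y) -scalemxAl -scalemxAr scalerA //.
    move=> x; exact: scale_su2 (s_pm x) (Hr.2 x).
  have sl : s (lon K) = 1 by rewrite /s (hom_lon _ _ _ Hd (kg_lon_comm K)) expr0z.
  have sm : s (mer K) = -1 by rewrite /s Hdm expr1z.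
  have Hl'' : rho' (lon K) = Dm eta by rewrite /rho' sl scale1r.
  have Hm'' : rho' (mer K) = Dm (theta + pi) by rewrite /rho' sm Hm' DmDpi.
  apply: (lon_trivial Hr' _ Hl''); apply: cyc_comm; apply: (Hc rho' Hr').
  rewrite (slopeE _ _ Hr') Hm'' Hl'' !Dm_powz Dm_addr.
  have -> : p%:~R * (theta + pi) + q%:~R * eta = 2 * pi * k%:~R by rewrite -Hk; ring.
  exact: Dm2pik.
move=> Hc theta eta [[[rho [Hr [Hm Hl]]] He] [k Hk]]; apply: He.
have Hm' : rho (mer K) = Dm theta := Hm.
have Hl' : rho (lon K) = Dm eta := Hl.
pose sg x := adm (rho x).
have Hs : SO3_rep sg.
  split.
    move=> x y; rewrite /sg (Hr.1 x y); exact: adm_mul (Hr.2 x) (Hr.2 y).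
  move=> x; exact: adm_SO3 (Hr.2 x).
have H1 : sg (surgery_slope K p q) = 1%:M.
  rewrite /sg (slopeE _ _ Hr) Hm' Hl' !Dm_powz Dm_addr Hk /adm qof_Dm.
  have [S C] := @piz R k.
  set c := cos _ in C *; rewrite S /adq /= one_mk3; congr mk3; try ring; by rewrite -C; ring.
have [g Hg] := Hc sg Hs H1.
apply: (lon_trivial Hr _ Hl') => x y.
have [a Ea] := Hg x; have [b Eb] := Hg y.
exact: (@su2_comm R _ _ _ _ _ (Hr.2 x) (Hr.2 y) Ea Eb).
Qed.
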